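(* Let $c_1>0$ be a sufficiently small absolute constant and $K=\exp(c_1 s)$. For any fixed $\mathbf{A}\in\mathcal{A}_{\mathsf{suc}}$, with probability at least $1-\exp(-s/2)$ over $V=\{\mathbf{v}_1,\dots,\mathbf{v}_{16sK}\}$ drawn independently and uniformly from $\frac1{\sqrt d}\mathcal{H}_d$, $$\big|\mathcal{N}(\mathsf{O}^{\mathbf{M}_\mathbf{A}}(\mathbf{A},V),d^{-8})\big|\ge K.$$
   Context: Setting: $d$ large, $\delta\in(0,1)$, $k=d^{1-\delta-o(1)}$, $s=d^{1-\delta/2}\log^2 d$, $\xi=2\exp(-\log^5 d)$, $\xi'=\sqrt d\xi$, $\mathcal{H}_d=\{-1,1\}^d$, $\mathbb{S}^d$ the unit sphere. A fixed deterministic $(k,n)$-protocol: on $\mathbf{A}\in\{-1,1\}^{(d/2)\times d}$ Alice sends $\mathbf{M}_\mathbf{A}\in\{0,1\}^{kd}$; after receiving $\mathbf{v}\in\frac1{\sqrt d}\mathcal{H}_d$ she sends $\mathbf{R}_{\mathbf{A},\mathbf{v}}\in(\mathsf{row}(\mathbf{A})\cup\{\mathsf{nil}\})^n$; Bob outputs a unit vector $\mathbf{x}_{\mathbf{M},\mathbf{v},\mathbf{R}}\in\mathbb{S}^d$, defined for all $\mathbf{M}\in\{0,1\}^{kd}$, $\mathbf{v}$, $\mathbf{R}\in(\{-1,1\}^d\cup\{\mathsf{nil}\})^n$; $\mathbf{x}_{\mathbf{A},\mathbf{v}}=\mathbf{x}_{\mathbf{M}_\mathbf{A},\mathbf{v},\mathbf{R}_{\mathbf{A},\mathbf{v}}}$.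 Success on $(\mathbf{A},\mathbf{v})$: $\|\mathbf{A}\mathbf{x}_{\mathbf{A},\mathbf{v}}\|_\infty\le\xi'$ and $|\langle\mathbf{v},\mathbf{x}_{\mathbf{A},\mathbf{v}}\rangle|\ge\sqrt{s/d}$; the protocol succeeds with probability at least $1/2$ over uniform $(\mathbf{A},\mathbf{v})$. $\mathcal{A}_{\mathsf{suc}}$: the matrices $\mathbf{A}$ on which it succeeds with probability at least $1/4$ over uniform $\mathbf{v}$. For a matrix $\mathbf{B}\in\{-1,1\}^{m\times d}$ ($m\le d/2$), write $\mathbf{R}\subseteq\mathsf{row}(\mathbf{B})\cup\{\mathsf{nil}\}$ if every entry of $\mathbf{R}$ is $\mathsf{nil}$ or a row of $\mathbf{B}$. Table: $\mathsf{T}^{\mathbf{M}}(\mathbf{B},V)=\{\mathbf{x}_{\mathbf{M},\mathbf{v},\mathbf{R}}:\mathbf{v}\in V,\ \mathbf{R}\subseteq\mathsf{row}(\mathbf{B})\cup\{\mathsf{nil}\}\}$. Orthogonal entries: $\mathsf{O}^{\mathbf{M}}(\mathbf{B},V)=\{\mathbf{x}\in\mathsf{T}^{\mathbf{M}}(\mathbf{B},V):\|\mathbf{B}\mathbf{x}\|_\infty\le\xi'\}$. For $X\subseteq\mathbb{R}^d$ and $\alpha>0$, $\mathcal{N}(X,\alpha)$ denotes a largest subset $X'\subseteq X$ whose points have pairwise distance at least $\alpha$. *)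

(* Defs.v *)
From HB Require Import structures.
From mathcomp Require Import all_boot all_order all_algebra.
From mathcomp Require Import finmap.
From mathcomp Require Import boolp reals Rstruct.
From mathcomp Require Import sequences exp.
From Stdlib Require Import Rdefinitions.

Set Implicit Arguments.
Unset Strict Implicit.
Unset Printing Implicit Defensive.
Import Order.TTheory GRing.Theory Num.Theory.
Local Open Scope ring_scope.
Local Open Scope fset_scope.

Notation R := Rdefinitions.R.

(* A sign vector / sign matrix is encoded by booleans: true |-> 1, false |-> -1. *)
Definition sgnR (b : bool) : R := if b then 1 else -1.
Definition sgnmx (m d : nat) (A : 'M[bool]_(m, d)) : 'M[R]_(m, d) := map_mx sgnR A.

(* v in (1/sqrt d) H_d, encoded by a boolean row vector *)
Definition vreal (d : nat) (v : 'rV[bool]_d) : 'rV[R]_d :=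
  (Num.sqrt (d%:R))^-1 *: sgnmx v.

Definition ninf (m d : nat) (B : 'M[R]_(m, d)) (x : 'rV[R]_d) : R :=
  \big[Num.max/0]_(i < m) `|(B *m x^T) i 0|.

Definition dotR (d : nat) (u w : 'rV[R]_d) : R := \sum_(i < d) u 0 i * w 0 i.

Definition distR (d : nat) (u w : 'rV[R]_d) : R :=
  Num.sqrt (\sum_(i < d) (u 0 i - w 0 i) ^+ 2).

(* "R subseteq row(B) cup {nil}": every entry is nil (None) or a row of B *)
Definition sub_rows (m d n : nat) (B : 'M[bool]_(m, d))
    (Rm : n.-tuple (option 'rV[bool]_d)) : bool :=
  all (fun o => if o is Some r then [exists j : 'I_m, r == row j B] else true) Rm.

Definition bob_fun (d k n : nat) :=
  (k * d).-tuple bool -> 'rV[bool]_d -> n.-tuple (option 'rV[bool]_d) -> 'rV[R]_d.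

Definition table (m d k n : nat) (x : bob_fun d k n) (M : (k * d).-tuple bool)
    (B : 'M[bool]_(m, d)) (V : {set 'rV[bool]_d}) : {fset 'rV[R]_d} :=
  [fset x M v Rm | v in V, Rm in [pred Rm | sub_rows B Rm]].

Definition orth_entries (m d k n : nat) (x : bob_fun d k n) (xi' : R)
    (M : (k * d).-tuple bool) (B : 'M[bool]_(m, d)) (V : {set 'rV[bool]_d})
    : {fset 'rV[R]_d} :=
  [fset y in table x M B V | ninf (sgnmx B) y <= xi'].

(* alpha-separated subsets, and |N(X, alpha)| = size of a largest one *)
Definition separated (d : nat) (Y : {fset 'rV[R]_d}) (alpha : R) : bool :=
  [forall y1 : Y, forall y2 : Y, (y1 != y2) ==> (alpha <= distR (val y1) (val y2))].

Definition packing_card (d : nat) (X : {fset 'rV[R]_d}) (alpha : R) : nat :=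
  (\max_(Y <- fpowerset X | separated Y alpha) #|` Y|)%N.

Definition s_par (delta : R) (d : nat) : R :=
  powR (d%:R) (1 - delta / 2) * (ln (d%:R)) ^+ 2.
Definition xi_par (d : nat) : R := 2 * expR (- (ln (d%:R)) ^+ 5).
Definition xi'_par (d : nat) : R := Num.sqrt (d%:R) * xi_par d.

Definition success (d k n : nat) (Mmsg : 'M[bool]_(d./2, d) -> (k * d).-tuple bool)
    (Rmsg : 'M[bool]_(d./2, d) -> 'rV[bool]_d -> n.-tuple (option 'rV[bool]_d))
    (x : bob_fun d k n) (s : R) (A : 'M[bool]_(d./2, d)) (v : 'rV[bool]_d) : bool :=
  let y := x (Mmsg A) v (Rmsg A v) in
  (ninf (sgnmx A) y <= xi'_par d) && (Num.sqrt (s / d%:R) <= `|dotR (vreal v) y|).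

(* Main.v *)
Require Import Defs.
From HB Require Import structures.
From mathcomp Require Import all_boot all_order all_algebra.
From mathcomp Require Import finmap.
From mathcomp Require Import boolp reals Rstruct.
From mathcomp Require Import sequences exp.
Import Order.TTheory GRing.Theory Num.Theory.
Local Open Scope ring_scope.
Local Open Scope fset_scope.
From mathcomp Require Import ring lra zify.
Set Implicit Arguments. Unset Strict Implicit. Unset Printing Implicit Defensive.
Local Close Scope fset_scope.
Lemma eq_leR (x y : R) : x = y -> x <= y. Proof. by move->. Qed.

Section Greedy.
Variable T : finType.
Variable newb : T -> seq T -> bool.

Fixpoint G (l : seq T) : seq T :=
  if l is v :: l' then (if newb v (G l') then v :: G l' else G l') else [::].

Lemma cardR (U : finType) (P : pred U) :
  (#|[set x | P x]|%:R : R) = \sum_(x : U) (P x)%:R.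
Proof.
rewrite -sum1_card natr_sum big_mkcond /=; apply: eq_bigr => x _.
by rewrite inE; case: (P x).
Qed.

Lemma sum_tupleS (N : nat) (F : N.+1.-tuple T -> R) :
  \sum_(V : N.+1.-tuple T) F V = \sum_(v : T) \sum_(W : N.-tuple T) F [tuple of v :: W].
Proof.
rewrite pair_bigA /= (reindex (fun p : T * N.-tuple T => [tuple of p.1 :: p.2])) //=.
exists (fun t : N.+1.-tuple T => (thead t, [tuple of behead t])) => [[v W] _|t _] /=.
  by rewrite theadE; congr pair; apply: val_inj.
by rewrite [RHS]tuple_eta.
Qed.

Lemma count_G (q : R) (M : nat) : 0 <= q ->
  (forall g, (size g <= M)%N -> (#|[set v | ~~ newb v g]|%:R : R) <= q) ->
  forall N m, (m <= M)%N ->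
  (#|[set V : N.-tuple T | size (G V) == m]|%:R : R)
    <= 'C(N, m)%:R * #|T|%:R ^+ m * q ^+ (N - m).
Proof.
move=> q0 hq; elim=> [|N IH] m mM.
  case: m mM => [|m] mM.
    rewrite bin0 expr0 subn0 expr0 !mul1r.
    apply: (@le_trans _ _ (#|{: 0.-tuple T}|%:R)); first by rewrite ler_nat max_card.
    by rewrite card_tuple expn0.
  have -> : [set V : 0.-tuple T | size (G V) == m.+1] = set0.
    by apply/setP => V; rewrite !inE (tuple0 V).
  by rewrite cards0 bin_small // !mul0r.
rewrite (@cardR _ (fun V : N.+1.-tuple T => size (G V) == m)) sum_tupleS exchange_big /=.
pose c (W : N.-tuple T) : R :=
  (size (G W) == m.-1)%:R * (0 < m)%:R * #|T|%:R + (size (G W) == m)%:R * q.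
apply: (@le_trans _ _ (\sum_(W : N.-tuple T) c W)).
  apply: ler_sum => W _; rewrite /c /=.
  set g := G W.
  case: (boolP (size g == m)) => hm.
    have hnew : forall v, newb v g -> (size (v :: g) == m) = false.
      by move=> v _ /=; rewrite (eqP hm) eqn_leq ltnn.
    rewrite mul1r.
    apply: (@le_trans _ _ (\sum_(v : T) (~~ newb v g)%:R)).
      apply: ler_sum => v _; case: (boolP (newb v g)) => hv /=.
        by rewrite (eqP hm) eqn_leq ltnn.
      by rewrite hm.
    rewrite -cardR; apply: (le_trans (hq g _)); first by rewrite (eqP hm).
    rewrite ler_wpDl // mulr_ge0 ?mulr_ge0 ?ler0n //.
  rewrite mul0r addr0.
  case: (boolP (size g == m.-1)) => hm1; last first.
    rewrite !mul0r.
    rewrite big1 // => v _; case: (newb v g) => /=; last by rewrite (negbTE hm).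
    clear c; case: m hm hm1 {mM} => [|m] hm hm1 //=.
    by rewrite eqSS (negbTE hm1).
  clear c; case: m hm hm1 {mM} => [|m] hm hm1 /=.
    by rewrite (eqP hm1) in hm.
  rewrite !mul1r.
  apply: (@le_trans _ _ (\sum_(v : T) 1)); last by rewrite sumr_const.
  apply: ler_sum => v _; case: (newb v g) => /=; first by rewrite eqSS hm1.
  by rewrite (negbTE hm).
rewrite /c big_split /= -!mulr_suml; clear c.
case: m mM => [|m] mM /=.
  rewrite mulr0 mul0r add0r -(@cardR _ (fun V : N.-tuple T => size (G V) == 0)).
  have := IH 0%N mM; rewrite !bin0 !expr0 !subn0 !mul1r => h.
  by rewrite exprSr; apply: ler_wpM2r.
have hm : (m <= M)%N by apply: ltnW.
rewrite mulr1 -(@cardR _ (fun V : N.-tuple T => size (G V) == m)).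
rewrite -(@cardR _ (fun V : N.-tuple T => size (G V) == m.+1)).
have h1 := IH m hm; have h2 := IH m.+1 mM.
rewrite binS natrD mulrDl mulrDl subSS [X in _ <= X]addrC.
apply: lerD.
  apply: (le_trans (ler_wpM2r _ h1)); first by rewrite ler0n.
  apply: eq_leR; rewrite exprS (mulrC #|T|%:R) !mulrA; apply: mulrAC.
case: (ltnP m N) => hmN.
  rewrite (_ : (N - m = (N - m.+1).+1)%N); last by rewrite subnSK.
  rewrite mulrC. apply: (le_trans (ler_wpM2l q0 h2)).
  apply: eq_leR; rewrite exprS [in RHS]exprS; move: (q ^+ _) => z; ring.
rewrite bin_small ?ltnS // !mul0r.
rewrite bin_small ?ltnS // !mul0r in h2.
by rewrite -(mul0r q); apply: ler_wpM2r.
Qed.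

End Greedy.
Lemma expR_gt0' (x : R) : 0 < expR x. Proof. exact: expR_gt0. Qed.

Lemma cosh_le (a : R) : expR a + expR (- a) <= 2 * expR (2 * a ^+ 2).
Proof.
have hE := expR_gt0' a; have hF := expR_gt0' (- a).
have hEF : expR a * expR (- a) = 1 by rewrite expRxMexpNx_1.
have h1 := expR_ge1Dx a; have h2 := expR_ge1Dx (- a).
case: (lerP (1/2) `|a|) => ha.
  have hb : `|a| <= 2 * a ^+ 2.
    rewrite -(real_normK (num_real a)) expr2.
    have := normr_ge0 a; nra.
  have e1 : expR a <= expR (2 * a ^+ 2).
    by rewrite ler_expR; apply: le_trans hb; apply: ler_norm.
  have e2 : expR (- a) <= expR (2 * a ^+ 2).
    by rewrite ler_expR; apply: le_trans hb; rewrite -normrN; apply: ler_norm.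
  lra.
have h3 := expR_ge1Dx (2 * a ^+ 2).
have haa : a ^+ 2 <= 1/4.
  rewrite -(real_normK (num_real a)); have := normr_ge0 a; nra.
suff : expR a + expR (- a) <= 2 + 4 * a ^+ 2 by lra.
have ha' : - (1/2) < a < 1/2 by rewrite -ltr_norml.
case/andP: ha' => ha1 ha2.
have k1 : expR a * (1 - a) <= 1.
  by rewrite -hEF; apply: ler_wpM2l; [apply: ltW | lra].
have k2 : expR (- a) * (1 + a) <= 1.
  by rewrite -hEF mulrC; apply: ler_wpM2r; [apply: ltW | lra].
rewrite expr2; nra.
Qed.
Definition Lsum (d : nat) (v : 'rV[bool]_d) (y : 'rV[R]_d) : R :=
  \sum_i sgnR (v 0 i) * y 0 i.

Lemma sum_prod_row (d : nat) (F : 'I_d -> bool -> R) :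
  \sum_(v : 'rV[bool]_d) \prod_i F i (v 0 i) = \prod_i (F i true + F i false).
Proof.
rewrite (eq_bigr (fun i => \sum_(b : bool) F i b)); last first.
  by move=> i _; rewrite big_bool.
rewrite bigA_distr_bigA /=.
rewrite (reindex (fun g : {ffun 'I_d -> bool} => \row_i g i)) /=; last first.
  exists (fun v : 'rV[bool]_d => [ffun i => v 0 i]) => [g _|v _].
    by apply/ffunP => i; rewrite ffunE mxE.
  by apply/rowP => i; rewrite !mxE ffunE.
by apply: eq_bigr => g _; apply: eq_bigr => i _; rewrite mxE.
Qed.

Lemma mgf (d : nat) (y : 'rV[R]_d) (lam : R) :
  \sum_(v : 'rV[bool]_d) expR (lam * Lsum v y)
    <= 2 ^+ d * expR (2 * lam ^+ 2 * \sum_i (y 0 i) ^+ 2).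
Proof.
pose F (i : 'I_d) (b : bool) := expR (lam * (sgnR b * y 0 i)).
rewrite (eq_bigr (fun v : 'rV[bool]_d => \prod_(i < d) F i (v 0 i))); last first.
  by move=> v _; rewrite /Lsum mulr_sumr expR_sum.
rewrite sum_prod_row /=.
have e2 : (2 : R) ^+ d = \prod_(i < d) (2 : R) by rewrite prodr_const card_ord.
rewrite mulr_sumr expR_sum e2 -big_split /=.
apply: ler_prod => i _; apply/andP; split.
  by rewrite addr_ge0 // ltW // expR_gt0.
rewrite /F /sgnR mul1r mulN1r mulrN.
have := cosh_le (lam * y 0 i).
by rewrite exprMn mulrA.
Qed.

Lemma hoeff1 (d : nat) (y : 'rV[R]_d) (u : R) :
  \sum_i (y 0 i) ^+ 2 = 1 -> 0 <= u ->
  #|[set v : 'rV[bool]_d | u <= Lsum v y]|%:R <= 2 ^+ d * expR (- (u ^+ 2 / 8)).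
Proof.
move=> hy hu.
pose lam := u / 4.
have hl : 0 <= lam by rewrite /lam divr_ge0.
have key : #|[set v : 'rV[bool]_d | u <= Lsum v y]|%:R * expR (lam * u)
    <= 2 ^+ d * expR (2 * lam ^+ 2).
  have := mgf y lam; rewrite hy mulr1; apply: le_trans.
  rewrite (@cardR _ (fun v : 'rV[bool]_d => u <= Lsum v y)) mulr_suml.
  apply: ler_sum => v _.
  case: (boolP (u <= Lsum v y)) => h /=.
    by rewrite mul1r ler_expR ler_wpM2l.
  by rewrite mul0r ltW // expR_gt0.
have e : expR (- (u ^+ 2 / 8)) = expR (2 * lam ^+ 2) * (expR (lam * u))^-1.
  by rewrite -expRN -expRD /lam; congr expR; field.
rewrite e mulrA ler_pdivlMr ?expR_gt0 //.
Qed.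

Lemma hoeff (d : nat) (y : 'rV[R]_d) (u : R) :
  \sum_i (y 0 i) ^+ 2 = 1 -> 0 <= u ->
  #|[set v : 'rV[bool]_d | u <= `|Lsum v y|]|%:R <= 2 * 2 ^+ d * expR (- (u ^+ 2 / 8)).
Proof.
move=> hy hu.
have hy' : \sum_i ((- y) 0 i) ^+ 2 = 1.
  by rewrite -hy; apply: eq_bigr => i _; rewrite mxE sqrrN.
have hL : forall v, Lsum v (- y) = - Lsum v y.
  by move=> v; rewrite /Lsum -sumrN; apply: eq_bigr => i _; rewrite mxE mulrN.
apply: (@le_trans _ _ (#|[set v : 'rV[bool]_d | u <= Lsum v y]|%:R
   + #|[set v : 'rV[bool]_d | u <= Lsum v (- y)]|%:R)).
  rewrite -natrD ler_nat; apply: (leq_trans _ (leq_card_setU _ _)).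
  apply: subset_leq_card; apply/subsetP => v; rewrite !inE hL.
  by case: (lerP 0 (Lsum v y)) => h; [rewrite ger0_norm // => -> | rewrite ltr0_norm // => ->; rewrite orbT].
have := hoeff1 hy hu; have := hoeff1 hy' hu; lra.
Qed.
Lemma distR_sym (d : nat) (y z : 'rV[R]_d) : distR y z = distR z y.
Proof. by rewrite /distR; congr Num.sqrt; apply: eq_bigr => i _; rewrite -sqrrN opprB. Qed.

Lemma distR_self (d : nat) (y : 'rV[R]_d) : distR y y = 0.
Proof. by rewrite /distR big1 ?sqrtr0 // => i _; rewrite subrr expr0n. Qed.

Lemma comp_le_dist (d : nat) (y z : 'rV[R]_d) i : `|y 0 i - z 0 i| <= distR y z.
Proof.
rewrite /distR -sqrtr_sqr ler_sqrt; last by rewrite sumr_ge0 // => j _; rewrite sqr_ge0.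
rewrite (bigD1 i) //= lerDl sumr_ge0 // => j _; by rewrite sqr_ge0.
Qed.

Lemma sgnR_norm b : `|sgnR b| = 1.
Proof. by case: b; rewrite /sgnR ?normrN normr1. Qed.

Lemma Lsum_diff (d : nat) (v : 'rV[bool]_d) (y z : 'rV[R]_d) :
  `|Lsum v y - Lsum v z| <= d%:R * distR y z.
Proof.
rewrite /Lsum -sumrB.
apply: (le_trans (ler_norm_sum _ _ _)).
apply: (@le_trans _ _ (\sum_(i < d) distR y z)); last first.
  by rewrite sumr_const card_ord mulr_natl.
apply: ler_sum => i _; rewrite -mulrBr normrM sgnR_norm mul1r.
exact: comp_le_dist.
Qed.

Lemma dotR_vreal (d : nat) (v : 'rV[bool]_d) (y : 'rV[R]_d) :
  dotR (vreal v) y = (Num.sqrt d%:R)^-1 * Lsum v y.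
Proof.
rewrite /dotR /Lsum mulr_sumr; apply: eq_bigr => i _.
by rewrite /vreal /sgnmx !mxE mulrA.
Qed.

Lemma success_L (d : nat) (s : R) (v : 'rV[bool]_d) (y : 'rV[R]_d) :
  (0 < d)%N -> 0 <= s ->
  Num.sqrt (s / d%:R) <= `|dotR (vreal v) y| -> Num.sqrt s <= `|Lsum v y|.
Proof.
move=> d0 s0; rewrite dotR_vreal normrM ger0_norm ?invr_ge0 ?sqrtr_ge0 //.
have hd : 0 < Num.sqrt (d%:R : R) by rewrite sqrtr_gt0 ltr0n.
rewrite ler_pdivlMl // => h.
have -> : s = (s / d%:R) * d%:R by rewrite mulfVK // pnatr_eq0 -lt0n.
rewrite sqrtrM ?divr_ge0 // mulrC; exact: h.
Qed.
Section App.
Variables (d k n : nat) (Mmsg : 'M[bool]_(d./2, d) -> (k * d).-tuple bool)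
  (Rmsg : 'M[bool]_(d./2, d) -> 'rV[bool]_d -> n.-tuple (option 'rV[bool]_d))
  (x : bob_fun d k n) (s : R) (A : 'M[bool]_(d./2, d)).
Hypothesis hR : forall A v, sub_rows A (Rmsg A v).
Hypothesis hunit : forall M v Rm, distR (x M v Rm) 0 = 1.
Hypothesis d_gt0 : (0 < d)%N.
Hypothesis s_ge0 : 0 <= s.

Definition fA v := x (Mmsg A) v (Rmsg A v).
Definition Sb v := success Mmsg Rmsg x s A v.
Definition alpha : R := d%:R ^- 8.
Definition newbA (v : 'rV[bool]_d) (g : seq 'rV[bool]_d) :=
  Sb v && all (fun u => alpha <= distR (fA v) (fA u)) g.

Lemma alpha_gt0 : 0 < alpha.
Proof. by rewrite /alpha invr_gt0 exprn_gt0 // ltr0n. Qed.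

Lemma dalpha : d%:R * alpha <= 1.
Proof.
have hd : (0 : R) < d%:R ^+ 8 by rewrite exprn_gt0 // ltr0n.
rewrite /alpha ler_pdivrMr // mul1r -natrX ler_nat.
by rewrite -{1}(expn1 d) leq_pexp2l.
Qed.

Lemma unit_sum v : \sum_i (fA v 0 i) ^+ 2 = 1.
Proof.
have := hunit (Mmsg A) v (Rmsg A v); rewrite /distR -/(fA v) => h.
have h0 : 0 <= \sum_(i < d) (fA v 0 i - (0 : 'rV[R]_d) 0 i) ^+ 2.
  by rewrite sumr_ge0 // => i _; rewrite sqr_ge0.
have e : \sum_(i < d) (fA v 0 i - (0 : 'rV[R]_d) 0 i) ^+ 2 = 1.
  by rewrite -(sqr_sqrtr h0) h expr1n.
by rewrite -e; apply: eq_bigr => i _; rewrite mxE subr0.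
Qed.

Lemma ball v u : Sb v -> distR (fA v) (fA u) < alpha ->
  Num.sqrt s - 1 <= `|Lsum v (fA u)|.
Proof.
rewrite /Sb /success /= => /andP [_ h] hdist.
have h1 := success_L d_gt0 s_ge0 h.
have h2 := Lsum_diff v (fA v) (fA u).
have h3 : d%:R * distR (fA v) (fA u) <= 1.
  apply: le_trans dalpha; apply: ler_wpM2l; [by rewrite ler0n | exact: ltW].
have h4 : `|Lsum v (fA v)| <= `|Lsum v (fA u)| + `|Lsum v (fA v) - Lsum v (fA u)|.
  rewrite -[X in `|X| <= _](subrK (Lsum v (fA u))) addrC.
  by rewrite -[X in _ <= X + _]normrN; apply: (le_trans (ler_normD _ _)); rewrite normrN.
rewrite /fA in h1 h2 h3 h4 *; lra.
Qed.

Lemma qbound0 (B : R) :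
  (forall u, #|[set v | Sb v && (distR (fA v) (fA u) < alpha)]|%:R <= B) ->
  forall g, (#|[set v | ~~ newbA v g]|%:R : R)
     <= #|[set v | ~~ Sb v]|%:R + (size g)%:R * B.
Proof.
move=> hB; elim=> [|u g IH].
  rewrite mul0r addr0 ler_nat; apply: subset_leq_card; apply/subsetP => v.
  by rewrite !inE /newbA /= andbT.
apply: (@le_trans _ _ (#|[set v | ~~ newbA v g]|%:R
   + #|[set v | Sb v && (distR (fA v) (fA u) < alpha)]|%:R)).
  rewrite -natrD ler_nat; apply: (leq_trans _ (leq_card_setU _ _)).
  apply: subset_leq_card; apply/subsetP => v; rewrite !inE /newbA /=.
  case: (Sb v) => //=; rewrite ltNge.
  by case: (alpha <= distR (fA v) (fA u)) => /=; rewrite ?orbF ?orbT.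
have e : ((size (u :: g))%:R : R) = (size g)%:R + 1 by rewrite /= -addn1 natrD.
rewrite e; have := hB u; lra.
Qed.

Lemma G_sub l : {subset G newbA l <= l}.
Proof.
elim: l => [|v l IH] //= u.
case: (newbA v (G newbA l)) => /=.
  by rewrite !inE => /orP [->|/IH ->] //; rewrite orbT.
by move/IH; rewrite inE => ->; rewrite orbT.
Qed.

Lemma G_S l u : u \in G newbA l -> Sb u.
Proof.
elim: l => [|v l IH] //=.
case hv: (newbA v (G newbA l)) => /=; last exact: IH.
rewrite inE => /orP [/eqP ->|/IH] //.
by case/andP: hv.
Qed.

Lemma G_sep l u1 u2 : u1 \in G newbA l -> u2 \in G newbA l -> u1 != u2 ->
  alpha <= distR (fA u1) (fA u2).
Proof.
elim: l => [|v l IH] //=.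
case hv: (newbA v (G newbA l)) => /=; last exact: IH.
case/andP: hv => _ /allP hall.
rewrite !inE => /orP [/eqP ->|h1] /orP [/eqP ->|h2].
- by rewrite eqxx.
- by move=> _; apply: hall.
- by move=> _; rewrite distR_sym; apply: hall.
- exact: IH.
Qed.

Lemma G_uniq l : uniq (G newbA l).
Proof.
elim: l => [|v l IH] //=.
case hv: (newbA v (G newbA l)) => //=; rewrite IH andbT.
apply/negP => hin; case/andP: hv => _ /allP /(_ v hin).
by rewrite distR_self lt_geF // alpha_gt0.
Qed.

Lemma G_map_uniq l : uniq (map fA (G newbA l)).
Proof.
rewrite map_inj_in_uniq ?G_uniq // => u1 u2 h1 h2 he.
apply/eqP; apply/negPn/negP => hne.
have := G_sep h1 h2 hne; rewrite he distR_self.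
by rewrite lt_geF // alpha_gt0.
Qed.

Lemma packing_ge (N : nat) (V : N.-tuple 'rV[bool]_d) :
  (size (G newbA V) <= packing_card
       (orth_entries x (xi'_par d) (Mmsg A) A [set v in V]) (d%:R ^- 8))%N.
Proof.
set Y := [fset y in map fA (G newbA V)]%fset.
have hY : #|` Y| = size (G newbA V).
  by rewrite /Y card_fseq undup_id ?G_map_uniq // size_map.
rewrite -hY /packing_card.
apply: (@leq_bigmax_seq _ _ _ (fun Z : {fset 'rV[R]_d} => #|` Z|) Y).
  rewrite fpowersetE; apply/fsubsetP => y.
  rewrite /Y inE /= => /mapP [u hu ->].
  have hSu := G_S hu.
  have hV : u \in [set v in V] by rewrite inE; apply: G_sub.
  rewrite /orth_entries inE /=; apply/andP; split.
    rewrite /table.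
    by apply: (in_imfset2 _ (fun v Rm => x (Mmsg A) v Rm)) => //=; rewrite inE; apply: hR.
  by move: hSu; rewrite /Sb /success /= => /andP [].
apply/forallP => y1; apply/forallP => y2; apply/implyP => hne.
have := valP y1; have := valP y2.
rewrite /Y !inE /= => /mapP [u2 hu2 e2] /mapP [u1 hu1 e1].
have -> : fsval y1 = fA u1 by exact: e1.
have -> : fsval y2 = fA u2 by exact: e2.
apply: (G_sep hu1 hu2).
apply/negP => /eqP e; move: hne; rewrite -(inj_eq val_inj).
have -> : val y1 = fA u1 by exact: e1.
have -> : val y2 = fA u2 by exact: e2.
by rewrite e eqxx.
Qed.

End App.
Lemma bin_le_exp (n m : nat) : ('C(n, m) <= n ^ m)%N.
Proof.
elim: n m => [|n IH] [|m] //.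
rewrite binS.
apply: (leq_trans (leq_add (IH m.+1) (IH m))).
have hab : (n ^ m <= n.+1 ^ m)%N by case: (m) => [|m'] //; rewrite leq_exp2r.
rewrite !expnS; nia.
Qed.

Definition S0 : R := 128 * 128.

Lemma expR1_ge2 : (2 : R) <= expR 1.
Proof. by have := expR_ge1Dx (1 : R); rewrite (_ : 1 + 1 = 2 :> R) //. Qed.

Lemma num1 (s c1 : R) : S0 <= s -> 0 < c1 -> c1 <= 1/32 ->
  16 * expR (c1 * s) * expR (- ((Num.sqrt s - 1) ^+ 2 / 8)) <= 1.
Proof.
rewrite /S0 => hs hc0 hc1.
set w := Num.sqrt s.
have s0 : 0 <= s by lra.
have hw2 : w ^+ 2 = s by rewrite /w sqr_sqrtr.
have w0 : 0 <= w by rewrite /w sqrtr_ge0.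
have hw : 128 <= w.
  rewrite -(@ler_pXn2r _ 2) // ?nnegrE // hw2 expr2; lra.
have e1 : c1 * s <= s / 32.
  have : c1 * s <= 1/32 * s by rewrite ler_wpM2r // ltW.
  lra.
have e2 : s / 16 <= (w - 1) ^+ 2 / 8.
  have hww : 128 * w <= w * w by rewrite ler_wpM2r.
  rewrite -hw2 sqrrB !expr2; lra.
have e3 : 16 <= expR (s / 32) by have := expR_ge1Dx (s / 32); lra.
rewrite -mulrA -expRD.
have : expR (c1 * s - (w - 1) ^+ 2 / 8) <= expR (- (s / 32)).
  rewrite ler_expR; lra.
rewrite expRN => h.
have hp : 0 < expR (s / 32) by apply: expR_gt0.
have : 16 * expR (c1 * s - (w - 1) ^+ 2 / 8) <= 16 * (expR (s / 32))^-1.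
  by rewrite ler_pM2l.
move=> h2; apply: (le_trans h2).
by rewrite ler_pdivrMr // mul1r.
Qed.

Lemma num2 (s c1 : R) : S0 <= s -> 0 < c1 -> c1 <= 1/32 ->
  let K := expR (c1 * s) in let N := Num.truncn (16 * s * K) in
  let M := Num.truncn K in
  (M <= N)%N /\ (0 < N)%N /\
  (M.+1%:R * N%:R ^+ M * (7/8) ^+ (N - M) <= expR (- (s / 2))).
Proof.
move=> hs hc0 hc1; rewrite /S0 in hs; intros K N M.
have eK : K = expR (c1 * s) by [].
have eN : N = Num.truncn (16 * s * K) by [].
have eM : M = Num.truncn K by [].
clearbody K N M.
have hsa : 512 <= s / 32 by lra.
clear hs.
have s0 : 0 <= s by lra.
have hc1s0 : 0 <= c1 * s by rewrite mulr_ge0 // ltW.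
have hc1s : c1 * s <= s / 32.
  have : c1 * s <= 1/32 * s by rewrite ler_wpM2r.
  lra.
have hK1 : 1 <= K by have := expR_ge1Dx (c1 * s); rewrite -eK; lra.
have hK0 : 0 <= K by lra.
have hKs1 : K <= K * s by rewrite ler_peMr //; lra.
have hKs2 : s <= K * s by rewrite ler_peMl //; lra.
have /andP [hM1 hM2] := truncn_itv hK0.
have hNK : 0 <= 16 * s * K by rewrite !mulr_ge0 //.
have /andP [hN1 hN2] := truncn_itv hNK.
rewrite -eM -eN -natr1 in hM1 hM2 hN1 hN2.
have hMN : (M <= N)%N.
  rewrite -(ler_nat R); lra.
split => //.
split.
  rewrite -(ltr_nat R); lra.
have hKs : K <= expR (s / 32) by rewrite eK ler_expR.
have hE32 := expR_ge1Dx (s / 32).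
have hE16 : expR (s / 16) = expR (s / 32) * expR (s / 32).
  by rewrite -expRD; congr expR; field.
have e16 : 16 * s <= expR (s / 16).
  rewrite hE16.
  have h512 : 512 <= expR (s / 32) by lra.
  have : 512 * expR (s / 32) <= expR (s / 32) * expR (s / 32).
    by rewrite ler_wpM2r // ltW // expR_gt0.
  lra.
have hN : (N%:R : R) <= expR (s / 8).
  have -> : s / 8 = s / 16 + s / 16 by field.
  rewrite expRD.
  have h1 : 16 * s * K <= expR (s / 16) * K by rewrite ler_wpM2r.
  have h2 : expR (s / 16) * K <= expR (s / 16) * expR (s / 16).
    rewrite ler_wpM2l ?(ltW (expR_gt0 _)) //.
    apply: (le_trans hKs); rewrite ler_expR; lra.
  lra.
have hNM : (N%:R : R) ^+ M <= expR (M%:R * (s / 8)).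
  by rewrite expRM_natl; apply: lerXn2r; rewrite ?nnegrE ?ler0n ?(ltW (expR_gt0 _)).
have h78 : (7/8 : R) ^+ (N - M) <= expR ((N - M)%N%:R * (- (1/8))).
  rewrite expRM_natl; apply: lerXn2r; rewrite ?nnegrE ?(ltW (expR_gt0 _)) //.
  all: try (have := expR_gt0 (- (1/8) : R); have := expR_ge1Dx (- (1/8) : R); lra).
have hM : (M.+1%:R : R) <= expR (1 + c1 * s).
  rewrite expRD -eK -natr1.
  have h2 := expR1_ge2.
  have : 2 * K <= expR 1 * K by rewrite ler_wpM2r.
  lra.
apply: (@le_trans _ _ (expR (1 + c1 * s) * expR (M%:R * (s / 8))
                       * expR ((N - M)%N%:R * (- (1/8))))).
  have hab : M.+1%:R * N%:R ^+ M <= expR (1 + c1 * s) * expR (M%:R * (s / 8)).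
    by apply: ler_pM; rewrite ?exprn_ge0 ?ler0n.
  apply: (ler_pM _ _ hab h78).
    by rewrite mulr_ge0 ?exprn_ge0 ?ler0n.
  by rewrite exprn_ge0 //; lra.
rewrite -!expRD ler_expR natrB //.
have hMs : M%:R * s <= K * s by rewrite ler_wpM2r.
lra.
Qed.
Lemma card_compl (U : finType) (P : pred U) :
  (#|[set x | P x]| + #|[set x | ~~ P x]|)%N = #|U|.
Proof.
rewrite -(cardsC [set x | P x]); congr addn; apply: eq_card => x.
by rewrite !inE.
Qed.

Lemma ind_le_sum (k M : nat) :
  ((k <= M)%N%:R : R) = \sum_(m < M.+1) (k == m)%:R.
Proof.
elim: M => [|M IH]; first by rewrite big_ord1 leqn0.
rewrite big_ord_recr /= -IH.
case hk: (k == M.+1).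
  by move/eqP: hk => ->; rewrite ltnn leqnn add0r.
by rewrite leq_eqVlt hk /= ltnS addr0.
Qed.
Lemma s_large (delta : R) (d : nat) : 0 < delta -> delta < 1 ->
  ((Num.truncn (expR S0)).+1 <= d)%N -> S0 <= s_par delta d.
Proof.
move=> hd0 hd1 hd.
have hS0 : 0 <= expR S0 by apply/ltW/expR_gt0.
have /andP [_ hT2] := truncn_itv hS0.
have hdR : expR S0 <= d%:R.
  apply/ltW/(lt_le_trans hT2); by rewrite ler_nat.
have hln : S0 <= ln (d%:R : R).
  by rewrite -[X in X <= _](expRK S0) ler_ln // posrE ?expR_gt0 // (lt_le_trans (expR_gt0 _) hdR).
have hS1 : 1 <= S0 by rewrite /S0; lra.
have hp : 1 <= powR (d%:R : R) (1 - delta / 2).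
  have h1d : (1 : R) <= d%:R.
    rewrite (_ : (1 : R) = 1%:R) // ler_nat; apply: leq_trans hd; by [].
  have hex : (0 : R) <= 1 - delta / 2 by lra.
  by have := ler_powR h1d hex; rewrite powRr0.
rewrite /s_par.
have hl1 : 1 <= ln (d%:R : R) by apply: le_trans hln.
have : ln (d%:R : R) <= ln (d%:R : R) ^+ 2.
  by rewrite expr2 ler_peMl //; apply: le_trans hl1.
have : ln (d%:R : R) ^+ 2 <= powR (d%:R : R) (1 - delta / 2) * ln (d%:R : R) ^+ 2.
  by rewrite ler_peMl // exprn_ge0 // (le_trans _ hl1).
move=> h1 h2; apply: (le_trans hln); exact: (le_trans h2 h1).
Qed.

Lemma s_facts (s : R) : S0 <= s -> 0 <= s /\ 0 <= Num.sqrt s - 1.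
Proof.
rewrite /S0 => hs; have s1 : 1 <= s by lra.
have s0 : 0 <= s by lra.
split => //.
have : 1 <= Num.sqrt s by rewrite -sqrtr1 ler_sqrt.
lra.
Qed.

Lemma c78 : (0:R) <= 7/8 /\ (7/8:R) <= 1. Proof. split; lra. Qed.

Lemma lin1 (t a b c : R) : t / 4 <= a -> b <= c -> c <= t / 8 -> t - a + b <= 7 / 8 * t.
Proof. lra. Qed.

Lemma lin2 (t a b e : R) : a + b = t -> a <= e * t -> t - e * t <= b.
Proof. lra. Qed.

Local Open Scope fset_scope.

Theorem lemma5p4 :
  exists c0 : R, 0 < c0 /\
  forall c1 : R, 0 < c1 -> c1 <= c0 ->
  forall delta : R, 0 < delta -> delta < 1 ->
  exists d0 : nat, forall d : nat, (d0 <= d)%N -> ~~ odd d ->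
  forall (k n : nat)
    (Mmsg : 'M[bool]_(d./2, d) -> (k * d).-tuple bool)
    (Rmsg : 'M[bool]_(d./2, d) -> 'rV[bool]_d -> n.-tuple (option 'rV[bool]_d))
    (x : bob_fun d k n),
    (* Alice's second message consists of rows of A or nil *)
    (forall A v, sub_rows A (Rmsg A v)) ->
    (* Bob always outputs a unit vector *)
    (forall M v Rm, distR (x M v Rm) 0 = 1) ->
    let s := s_par delta d in
    (* the protocol succeeds w.p. >= 1/2 over uniform (A, v) *)
    (#|[set Av : 'M[bool]_(d./2, d) * 'rV[bool]_d
         | success Mmsg Rmsg x s Av.1 Av.2]|%:R : R)
      >= #|{: 'M[bool]_(d./2, d) * 'rV[bool]_d}|%:R / 2 ->
    let K := expR (c1 * s) in
    let Nsamp := Num.truncn (16 * s * K) in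
    forall A : 'M[bool]_(d./2, d),
      (* A in A_suc *)
      (#|[set v : 'rV[bool]_d | success Mmsg Rmsg x s A v]|%:R : R)
        >= #|{: 'rV[bool]_d}|%:R / 4 ->
      (#|[set V : Nsamp.-tuple 'rV[bool]_d
          | K <= (packing_card
                    (orth_entries x (xi'_par d) (Mmsg A) A [set v in V])
                    (d%:R ^- 8))%:R]|%:R : R)
        / #|{: Nsamp.-tuple 'rV[bool]_d}|%:R
      >= 1 - expR (- (s / 2)).
Proof.
exists (1/32); split; first by lra.
move=> c1 hc10 hc1 delta hd0 hd1.
exists (Num.truncn (expR S0)).+1.
move=> d hd _ k n Mmsg Rmsg x hR hunit s _ K Nsamp A hA.
have es : s = s_par delta d by [].
have eK : K = expR (c1 * s) by [].
have eN : Nsamp = Num.truncn (16 * s * K) by [].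
clearbody s K Nsamp.
have hdpos : (0 < d)%N by apply: leq_trans hd.
have hs := s_large hd0 hd1 hd.
rewrite -es in hs.
have [hMN [hN0 hfin]] := num2 hs hc10 hc1.
rewrite -eK -eN in hMN hN0 hfin.
set M := Num.truncn K in hMN hN0 hfin.
have h1 := num1 hs hc10 hc1.
rewrite -eK in h1.
have [s0 hw] := s_facts hs.
clear hs.
have hK0 : 0 <= K by rewrite eK ltW // expR_gt0.
have /andP [hM1 hM2] := truncn_itv hK0.
rewrite -/M in hM1 hM2.
have ht : (#|{: 'rV[bool]_d}|%:R : R) = 2 ^+ d.
  by rewrite card_mx card_bool mul1n natrX.
pose B : R := 2 * 2 ^+ d * expR (- ((Num.sqrt s - 1) ^+ 2 / 8)).
have hB : forall u, (#|[set v | Sb Mmsg Rmsg x s A v &&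
            (distR (fA Mmsg Rmsg x A v) (fA Mmsg Rmsg x A u) < alpha d)]|%:R : R) <= B.
  move=> u; apply: le_trans (hoeff (unit_sum Mmsg Rmsg A hunit u) hw).
  rewrite ler_nat; apply: subset_leq_card; apply/subsetP => v; rewrite !inE.
  by case/andP => h h'; apply: ball.
pose q : R := 7 / 8 * 2 ^+ d.
have hq : forall g, (size g <= M)%N ->
    (#|[set v | ~~ newbA Mmsg Rmsg x s A v g]|%:R : R) <= q.
  move=> g hg; apply: (le_trans (qbound0 hB g)).
  have hc := card_compl (fun v => Sb Mmsg Rmsg x s A v).
  have hc' : (#|[set v | ~~ Sb Mmsg Rmsg x s A v]|%:R : R)
      = 2 ^+ d - #|[set v | Sb Mmsg Rmsg x s A v]|%:R.
    by rewrite -ht -hc natrD addrC addKr.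
  have hA' : (2 : R) ^+ d / 4 <= #|[set v | Sb Mmsg Rmsg x s A v]|%:R.
    by rewrite -ht.
  have hgB : (size g)%:R * B <= K * B.
    apply: ler_wpM2r; first by rewrite /B !mulr_ge0 ?exprn_ge0 ?(ltW (expR_gt0 _)).
    by apply: le_trans hM1; rewrite ler_nat.
  have hKB : K * B <= 2 ^+ d / 8.
    have hp : (0 : R) <= 2 ^+ d by rewrite exprn_ge0.
    have : K * B = (16 * K * expR (- ((Num.sqrt s - 1) ^+ 2 / 8))) * (2 ^+ d / 8).
      by rewrite /B; field.
    move=> ->; rewrite -[X in _ <= X]mul1r ler_wpM2r //; by rewrite divr_ge0.
  rewrite hc' /q; exact: lin1 hA' hgB hKB.
have hq0 : 0 <= q by rewrite /q mulr_ge0 ?exprn_ge0 //; case: c78.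
have hcnt := count_G hq0 hq.
have htN : (#|{: Nsamp.-tuple 'rV[bool]_d}|%:R : R) = (2 ^+ d) ^+ Nsamp.
  by rewrite card_tuple natrX ht.
have htN0 : (0 : R) < (2 ^+ d) ^+ Nsamp by rewrite !exprn_gt0.
rewrite htN ler_pdivlMr //.
set Good := [set V : Nsamp.-tuple 'rV[bool]_d | _].
have hsub : (#|[set V : Nsamp.-tuple 'rV[bool]_d
               | ~~ (size (G (newbA Mmsg Rmsg x s A) V) <= M)%N]| <= #|Good|)%N.
  apply: subset_leq_card; apply/subsetP => V; rewrite !inE -ltnNge => hV.
  have := packing_ge Mmsg x s A hR hdpos V.
  rewrite -(ler_nat R) => hp; apply: le_trans hp.
  apply: (le_trans (ltW hM2)); rewrite ler_nat; exact: hV.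
have hc := card_compl (fun V : Nsamp.-tuple 'rV[bool]_d =>
              (size (G (newbA Mmsg Rmsg x s A) V) <= M)%N).
rewrite card_tuple in hc.
have hbad : (#|[set V : Nsamp.-tuple 'rV[bool]_d
               | (size (G (newbA Mmsg Rmsg x s A) V) <= M)%N]|%:R : R)
            <= expR (- (s / 2)) * (2 ^+ d) ^+ Nsamp.
  rewrite (@cardR _ (fun V : Nsamp.-tuple 'rV[bool]_d =>
             (size (G (newbA Mmsg Rmsg x s A) V) <= M)%N)).
  rewrite (eq_bigr (fun V : Nsamp.-tuple 'rV[bool]_d => \sum_(m < M.+1)
            ((size (G (newbA Mmsg Rmsg x s A) V) == m)%:R : R))); last first.
    by move=> V _; rewrite ind_le_sum.
  rewrite exchange_big /=.
  apply: (@le_trans _ _ (\sum_(m < M.+1) ((Nsamp ^ M)%N%:R * (7/8) ^+ (Nsamp - M)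
                           * (2 ^+ d) ^+ Nsamp))); last first.
    rewrite sumr_const card_ord -[_ *+ M.+1]mulr_natl !mulrA.
    apply: ler_wpM2r; first by rewrite ltW.
    by rewrite natrX.
  apply: ler_sum => m _.
  have hmM : (m <= M)%N by rewrite -ltnS.
  have hmN : (m <= Nsamp)%N by apply: leq_trans hMN.
  rewrite -(@cardR _ (fun V : Nsamp.-tuple 'rV[bool]_d =>
                        size (G (newbA Mmsg Rmsg x s A) V) == m)).
  apply: (le_trans (hcnt Nsamp m hmM)).
  have ecard : (#|'rV[bool]_d|%:R : R) = 2 ^+ d by rewrite -ht.
  have e4 : forall C a b c : R, C * b * (a * c) = C * a * (b * c).
    by move=> C a b c; ring.
  rewrite ecard /q exprMn e4 -exprD subnKC //.
  apply: ler_wpM2r; first by rewrite ltW.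
  apply: ler_pM.
  - by rewrite ler0n.
  - by rewrite exprn_ge0 //; case: c78.
  - rewrite ler_nat; apply: (leq_trans (bin_le_exp _ _)).
    by rewrite leq_pexp2l.
  - by case: c78 => ? ?; apply: ler_wiXn2l => //; apply: leq_sub2l.
have hgood : (2 ^+ d) ^+ Nsamp - expR (- (s / 2)) * (2 ^+ d) ^+ Nsamp <= (#|Good|%:R : R).
  apply: (@le_trans _ _ (#|[set V : Nsamp.-tuple 'rV[bool]_d
               | ~~ (size (G (newbA Mmsg Rmsg x s A) V) <= M)%N]|%:R)); last by rewrite ler_nat.
  have : ((#|'rV[bool]_d| ^ Nsamp)%N%:R : R) = (2 ^+ d) ^+ Nsamp.
    by rewrite natrX -ht.
  move=> e; apply: (lin2 _ hbad); by rewrite -e -hc natrD.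
by rewrite mulrBl mul1r.
Qed.
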